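(* Let $S$ be a left amenable semigroup and let $X$ be a Banach space that is complemented in its bidual $X^{**}$ (i.e. there is a bounded linear projection from $X^{**}$ onto the canonical image of $X$). Then there exists an $X$-valued left invariant mean on $S$, i.e. a bounded linear map $M: B(S,X)\to X$ such that $M(x\chi_S)=x$ for all $x\in X$ and $M(f)=M(f_s)$ for all $f\in B(S,X)$ and $s\in S$.
   Context: $B(S,X)$ denotes the Banach space of all bounded functions $f:S\to X$ with the supremum norm; $x\chi_S$ denotes the function on $S$ identically equal to $x$; for $f$ defined on $S$ and $s\in S$, $f_s(t)=f(st)$ is the left translate. $S$ is left amenable if there is a left invariant mean on $\ell_\infty(S)$, i.e. a norm-one linear functional $m$ on $\ell_\infty(S)$ with $m(e)=1$ ($e$ the constant function $1$) and $m(f)=m(f_s)$ for all $f\in\ell_\infty(S)$, $s\in S$. *)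

(* Defs.v *)
From HB Require Import structures.
From mathcomp Require Import all_boot all_order all_algebra.
From mathcomp Require Import all_classical all_reals topology normedtype.
Set Implicit Arguments. Unset Strict Implicit. Unset Printing Implicit Defensive.
Import Order.TTheory GRing.Theory Num.Theory.
Import numFieldNormedType.Exports.
Local Open Scope classical_set_scope.
Local Open Scope ring_scope.

Section Defs.
Variable R : realType.

Section Bounded.
Variable S : Type.
Variable X : normedModType R.

Definition bdd (f : S -> X) : Prop := exists C : R, forall s, `|f s| <= C.

Definition supnorm (f : S -> X) : R := sup [set `|f s| | s in [set: S]].
End Bounded.

Definition ltrans (S T : Type) (op : S -> S -> S) (f : S -> T) (s : S) : S -> T :=
  fun t => f (op s t).

(* m : l_oo(S) -> R, represented as a function on S -> R of which only the
   values on bounded functions matter. *)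
Definition left_invariant_mean (S : Type) (op : S -> S -> S)
    (m : (S -> R) -> R) : Prop :=
  (forall (a : R) (f g : S -> R), bdd f -> bdd g ->
     m (fun s => a * f s + g s) = a * m f + m g) /\
  (* norm one: ||m|| <= 1 together with m(e) = 1 gives ||m|| = 1 *)
  (forall f : S -> R, bdd f -> `|m f| <= supnorm f) /\
  m (fun _ => 1) = 1 /\
  (forall (f : S -> R) (s : S), bdd f -> m (ltrans op f s) = m f).

Definition left_amenable (S : Type) (op : S -> S -> S) : Prop :=
  exists m, left_invariant_mean op m.

Section Bidual.
Variable X : normedModType R.

Definition dual_elem (phi : X -> R) : Prop :=
  (forall (a : R) (x y : X), phi (a *: x + y) = a * phi x + phi y) /\
  (exists C : R, forall x, `|phi x| <= C * `|x|).

Definition dnorm (phi : X -> R) : R := sup [set `|phi x| | x in [set x : X | `|x| <= 1]].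

(* elements of X^** : bounded linear functionals on X^*; a map
   F : (X -> R) -> R represents the functional phi |-> F phi on X^*
   (its values outside X^* are irrelevant). *)
Definition bidual_elem (F : (X -> R) -> R) : Prop :=
  (forall (a : R) (phi psi : X -> R), dual_elem phi -> dual_elem psi ->
     F (fun x => a * phi x + psi x) = a * F phi + F psi) /\
  (exists C : R, forall phi, dual_elem phi -> `|F phi| <= C * dnorm phi).

Definition beq (F G : (X -> R) -> R) : Prop :=
  forall phi, dual_elem phi -> F phi = G phi.

Definition bnorm (F : (X -> R) -> R) : R :=
  sup [set `|F phi| | phi in [set phi | dual_elem phi /\ dnorm phi <= 1]].

Definition canon (x : X) : (X -> R) -> R := fun phi => phi x.

Definition complemented_in_bidual : Prop :=
  exists P : ((X -> R) -> R) -> ((X -> R) -> R),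
    (forall F, bidual_elem F -> bidual_elem (P F)) /\
    (forall (a : R) (F G : (X -> R) -> R), bidual_elem F -> bidual_elem G ->
       beq (P (fun phi => a * F phi + G phi)) (fun phi => a * P F phi + P G phi)) /\
    (exists C : R, forall F, bidual_elem F -> bnorm (P F) <= C * bnorm F) /\
    (forall F, bidual_elem F -> beq (P (P F)) (P F)) /\
    (forall F, bidual_elem F -> exists x : X, beq (P F) (canon x)) /\
    (forall x : X, beq (P (canon x)) (canon x)).
End Bidual.

Definition X_valued_left_invariant_mean (S : Type) (op : S -> S -> S)
    (X : normedModType R) (M : (S -> X) -> X) : Prop :=
  (forall (a : R) (f g : S -> X), bdd f -> bdd g ->
     M (fun s => a *: f s + g s) = a *: M f + M g) /\
  (exists C : R, forall f : S -> X, bdd f -> `|M f| <= C * supnorm f) /\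
  (forall x : X, M (fun _ => x) = x) /\
  (forall (f : S -> X) (s : S), bdd f -> M f = M (ltrans op f s)).

End Defs.

(* Main.v *)
Require Import Defs.
From mathcomp Require Import all_boot all_order all_algebra.
From mathcomp Require Import all_classical all_reals topology normedtype.
Import numFieldNormedType.Exports.
From mathcomp Require Import ring lra.
Set Implicit Arguments. Unset Strict Implicit. Unset Printing Implicit Defensive.
Import Order.TTheory GRing.Theory Num.Theory.
Local Open Scope classical_set_scope.
Local Open Scope ring_scope.

Section HB.
Variables (R : realType) (X : normedModType R).

Definition lingraph (G : set (X * R)) :=
 [/\ (forall p q, G p -> G q -> G (p.1 + q.1, p.2 + q.2)),
  (forall (a : R) p, G p -> G (a *: p.1, a * p.2)),
  (forall p q, G p -> G q -> p.1 = q.1 -> p.2 = q.2) &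
  (forall p, G p -> p.2 <= `|p.1|)].

Variable x0 : X.
Definition G0 : set (X * R) := [set p | exists t : R, p = (t *: x0, t * `|x0|)].

Lemma G0_lin : lingraph G0.
Proof.
split.
- move=> p q [t ->] [s ->] /=; exists (t + s); by rewrite scalerDl mulrDl.
- move=> a p [t ->] /=; exists (a * t); by rewrite scalerA mulrA.
- move=> p q [t ->] [s ->] /= /eqP; rewrite -subr_eq0 -scalerBl scaler_eq0 subr_eq0.
  by case/orP => /eqP ->; rewrite ?normr0 ?mulr0.
- move=> p [t ->] /=; by rewrite normrZ ler_wpM2r // real_ler_norm // num_real.
Qed.

Definition PP := [set G | lingraph G /\ (G = set0 \/ G0 `<=` G)].

Lemma PP_chain (F : set (set (X * R))) : F `<=` PP -> total_on F subset ->
  PP (\bigcup_(G in F) G).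
Proof.
move=> FP tot.
have both : forall p q, (\bigcup_(G in F) G) p -> (\bigcup_(G in F) G) q ->
   exists G, [/\ F G, G p & G q].
  move=> p q [A FA Ap] [B FB Bq]; case: (tot _ _ FA FB) => sub.
  + by exists B; split => //; apply: sub.
  + by exists A; split => //; apply: sub.
split; first split.
- move=> p q Hp Hq; have [G [FG Gp Gq]] := both p q Hp Hq.
  have [[h _ _ _] _] := FP _ FG; by exists G => //; apply: h.
- move=> a p [G FG Gp]; have [[_ h _ _] _] := FP _ FG; by exists G => //; apply: h.
- move=> p q Hp Hq; have [G [FG Gp Gq]] := both p q Hp Hq.
  have [[_ _ h _] _] := FP _ FG; exact: h.
- move=> p [G FG Gp]; have [[_ _ _ h] _] := FP _ FG; exact: h.
have [[G [FG G0G]]|nG] := pselect (exists G, F G /\ G0 `<=` G).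
  right => p /G0G Gp; by exists G.
left; apply/seteqP; split => // p [G FG Gp].
have [_ [GE|G0G]] := FP _ FG; first by rewrite GE in Gp.
by exfalso; apply: nG; exists G.
Qed.

Lemma sup_ge (E : set R) x y : (forall z, E z -> z <= y) -> E x -> x <= sup E.
Proof.
move=> ub Ex; apply: (ub_le_sup (E := E)) => //; by exists y => z /ub.
Qed.

Lemma sup_le (E : set R) y : E !=set0 -> (forall z, E z -> z <= y) -> sup E <= y.
Proof. by move=> ne ub; apply: ge_sup. Qed.

Lemma HB_ext : exists phi : X -> R,
  [/\ (forall (a : R) (x y : X), phi (a *: x + y) = a * phi x + phi y),
      (forall v, `|phi v| <= `|v|) & phi x0 = `|x0|].
Proof.
have [A [[[Aadd Ascal Afun Adom] AG0] Amax]] := Zorn_bigcup PP_chain.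
have A00 : A (0, 0).
  have [A0|] := AG0; last by move=> h; apply: h; exists 0; rewrite scale0r mul0r.
  exfalso; apply: (Amax G0); last by split; [exact: G0_lin| right].
  rewrite A0; split => // h; have := h (0, 0); rewrite /set0 /=; apply.
  by exists 0; rewrite scale0r mul0r.
have G0A : G0 `<=` A.
  case: AG0 => // A0; by rewrite A0 in A00.
have D : forall y, exists r, A (y, r).
  move=> y; apply: contrapT => Dy.
  pose E := [set z | exists x r, A (x, r) /\ z = r - `|x - y|].
  have key : forall x1 r1 x2 r2, A (x1, r1) -> A (x2, r2) ->
      r1 - `|x1 - y| <= `|x2 + y| - r2.
    move=> x1 r1 x2 r2 A1 A2; have := Adom _ (Aadd _ _ A1 A2) => /=.
    have -> : x1 + x2 = (x1 - y) + (x2 + y) by rewrite addrACA addNr addr0.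
    move=> h; have := le_trans h (ler_normD _ _); lra.
  pose c := sup E.
  have cge : forall x r, A (x, r) -> r - `|x - y| <= c.
    move=> x r Axr; apply: (@sup_ge E _ (`|0 + y| - 0)).
      by move=> z [x1 [r1 [A1 ->]]]; apply: key.
    by exists x, r.
  have cle : forall x r, A (x, r) -> c <= `|x + y| - r.
    move=> x r Axr; apply: sup_le; first by exists (0 - `|0 - y|), 0, 0.
    by move=> z [x1 [r1 [A1 ->]]]; apply: key.
  pose A' := [set p | exists x r (t : R), A (x, r) /\ p = (x + t *: y, r + t * c)].
  have yc : A' (y, c) by exists 0, 0, 1; rewrite scale1r mul1r !add0r.
  have AA' : A `<=` A'.
    move=> p Ap; exists p.1, p.2, 0; rewrite scale0r mul0r !addr0; by case: p Ap.
  apply: (Amax A').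
    split => // h; apply: Dy; exists c; exact: h _ yc.
  split; last by right => p /G0A /AA'.
  split.
  - move=> p q [x [r [t [Axr ->]]]] [x' [r' [t' [Axr' ->]]]] /=.
    exists (x + x'), (r + r'), (t + t'); split; first exact: (Aadd _ _ Axr Axr').
    by congr pair; [rewrite scalerDl addrACA | ring].
  - move=> a p [x [r [t [Axr ->]]]] /=.
    exists (a *: x), (a * r), (a * t); split; first exact: (Ascal a _ Axr).
    congr pair; last ring. rewrite scalerDr; congr (_ + _). exact: (scalerA a t y).
  - move=> p q [x [r [t [Axr ->]]]] [x' [r' [t' [Axr' ->]]]] /= e.
    have [tt'|ntt'] := eqVneq t t'.
      rewrite -tt' in e *; have exx : x = x' by apply: (addIr (t *: y)).
      by have /= -> := Afun _ _ Axr Axr' exx.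
    exfalso; apply: Dy.
    have Ad := Aadd _ _ Axr (Ascal (-1) _ Axr'); rewrite /= !scaleN1r in Ad.
    have Ad2 := Ascal (t' - t)^-1 _ Ad; rewrite /= in Ad2.
    eexists; suff <- : (t' - t)^-1 *: (x + - x') = y by exact: Ad2.
    have -> : x - x' = (t' - t) *: y.
      rewrite scalerBl; apply/eqP; rewrite subr_eq addrAC -subr_eq opprK e; apply/eqP; exact: addrC.
    by rewrite scalerA mulVf ?scale1r // subr_eq0 eq_sym.
  - move=> p [x [r [t [Axr ->]]]] /=.
    have [t0|tn0] := eqVneq t 0.
      by rewrite t0 scale0r mul0r !addr0; exact: (Adom _ Axr).
    have [tgt|tlt] := ltrP 0 t.
      have := cle _ _ (Ascal t^-1 _ Axr); rewrite /=.
      have -> : `|t^-1 *: x + y| = t^-1 * `|x + t *: y|.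
        have -> : x + t *: y = t *: (t^-1 *: x + y).
          by rewrite scalerDr scalerA mulfV ?(gt_eqF tgt) // scale1r.
        by rewrite normrZ gtr0_norm // mulrA mulVf ?(gt_eqF tgt) // mul1r.
      move=> h; have := ler_wpM2l (ltW tgt) h.
      rewrite mulrBr !mulrA mulfV ?(gt_eqF tgt) // !mul1r.
      move=> h2; lra.
    have tneg : t < 0 by rewrite lt_neqAle tn0 tlt.
    pose s := - t; have sgt : 0 < s by rewrite /s oppr_gt0.
    have := cge _ _ (Ascal s^-1 _ Axr); rewrite /=.
    have -> : `|s^-1 *: x - y| = s^-1 * `|x + t *: y|.
      have -> : x + t *: y = s *: (s^-1 *: x - y).
        by rewrite scalerBr scalerA mulfV ?(gt_eqF sgt) // scale1r /s scaleNr opprK.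
      by rewrite normrZ gtr0_norm // mulrA mulVf ?(gt_eqF sgt) // mul1r.
    move=> h; have := ler_wpM2l (ltW sgt) h.
    rewrite mulrBr !mulrA mulfV ?(gt_eqF sgt) // !mul1r /s.
    move=> h2; lra.
pose phi x := xget 0 [set r | A (x, r)].
have Aphi x : A (x, phi x) by exact: (xgetPex 0 (D x)).
exists phi; split.
- move=> a x y; have /= H := Aadd _ _ (Ascal a _ (Aphi x)) (Aphi y).
  exact: (Afun _ _ (Aphi _) H erefl).
- move=> v; rewrite ler_norml; apply/andP; split; last exact: (Adom _ (Aphi v)).
  have /= H := Adom _ (Ascal (-1) _ (Aphi v)).
  rewrite scaleN1r normrN mulN1r in H; lra.
- have H : A (x0, `|x0|) by apply: G0A; exists 1; rewrite scale1r mul1r.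
  exact: (Afun _ _ (Aphi x0) H erefl).
Qed.
End HB.

Section Dual.
Variables (R : realType) (X : normedModType R).

Lemma dual_scale (phi : X -> R) a u : dual_elem phi -> phi (a *: u) = a * phi u.
Proof.
move=> [lin _]; have := lin a u 0; rewrite addr0 => ->.
have := lin 1 0 0; rewrite scale1r addr0 mul1r => h.
have -> : phi 0 = 0 by lra.
by rewrite addr0.
Qed.

Lemma dual0 (phi : X -> R) : dual_elem phi -> phi 0 = 0.
Proof. by move=> d; rewrite -(scale0r 0) (dual_scale 0 0 d) mul0r. Qed.

Lemma dual_add (phi : X -> R) u w : dual_elem phi -> phi (u + w) = phi u + phi w.
Proof. by move=> [lin _]; have := lin 1 u w; rewrite scale1r mul1r. Qed.

Lemma dnorm_ge (phi : X -> R) x : dual_elem phi -> `|x| <= 1 -> `|phi x| <= dnorm phi.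
Proof.
move=> [lin [C HC]] x1; apply: (@sup_ge _ _ _ `|C|); last by exists x.
move=> z [v v1 <-]; apply: (le_trans (HC v)).
apply: (le_trans (ler_wpM2r (normr_ge0 _) (ler_norm C))).
by rewrite -[leRHS]mulr1 ler_wpM2l.
Qed.

Lemma dnorm_ge0 (phi : X -> R) : dual_elem phi -> 0 <= dnorm phi.
Proof.
move=> d; apply: le_trans (dnorm_ge (x := 0) d _); by rewrite ?normr0.
Qed.

Lemma dual_bound (phi : X -> R) v : dual_elem phi -> `|phi v| <= dnorm phi * `|v|.
Proof.
move=> d; have [->|nv] := eqVneq v 0.
  by rewrite dual0 // !normr0 mulr0.
have nv0 : `|v| != 0 by rewrite normr_eq0.
have -> : v = `|v| *: (`|v|^-1 *: v) by rewrite scalerA mulfV // scale1r.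
rewrite (dual_scale _ _ d) normrM normr_id normrZ normr_id normfZV // mulr1 mulrC.
by rewrite ler_wpM2r //; apply: dnorm_ge => //; rewrite normfZV.
Qed.

Lemma dnorm_le1 (phi : X -> R) : (forall v, `|phi v| <= `|v|) -> dnorm phi <= 1.
Proof.
move=> h; apply: sup_le; first by exists `|phi 0|, 0; rewrite //= normr0.
by move=> z [v /= v1 <-]; apply: le_trans (h v) v1.
Qed.

Lemma HB_sep (x : X) : exists phi, [/\ dual_elem phi, dnorm phi <= 1 & phi x = `|x|].
Proof.
have [phi [lin b e]] := HB_ext x; exists phi; split => //.
  split => //; exists 1 => v; by rewrite mul1r.
exact: dnorm_le1.
Qed.

Lemma Jinj (x y : X) : (forall phi, dual_elem phi -> phi x = phi y) -> x = y.
Proof.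
move=> h; have [phi [d _ e]] := HB_sep (x - y).
move: e; rewrite dual_add // -scaleN1r dual_scale // h // mulN1r subrr => /esym/eqP.
by rewrite normr_eq0 scaleN1r subr_eq0 => /eqP.
Qed.

Lemma bnorm_ge (G : (X -> R) -> R) phi : bidual_elem G -> dual_elem phi -> dnorm phi <= 1 ->
  `|G phi| <= bnorm G.
Proof.
move=> [_ [C HC]] d d1; apply: (@sup_ge _ _ _ `|C|); last by exists phi.
move=> z [psi [dpsi dpsi1] <-]; apply: (le_trans (HC _ dpsi)).
apply: (le_trans (ler_wpM2r (dnorm_ge0 dpsi) (ler_norm C))).
by rewrite -[leRHS]mulr1 ler_wpM2l.
Qed.

Lemma dual_zero : dual_elem (fun _ : X => (0 : R)).
Proof. split; first by move=> *; rewrite mulr0 addr0. by exists 0 => v; rewrite normr0 mul0r. Qed.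

Lemma bnorm_le (G : (X -> R) -> R) B :
  (forall phi, dual_elem phi -> dnorm phi <= 1 -> `|G phi| <= B) -> bnorm G <= B.
Proof.
move=> h; apply: sup_le.
  exists `|G (fun _ => 0)|, (fun _ => 0) => //; split; first exact: dual_zero.
  by apply: dnorm_le1 => v; rewrite normr0.
by move=> z [phi [d d1] <-]; apply: h.
Qed.

Lemma bnorm_ge0 (G : (X -> R) -> R) : bidual_elem G -> 0 <= bnorm G.
Proof.
move=> b; apply: le_trans (bnorm_ge b dual_zero _) => //.
by apply: dnorm_le1 => v; rewrite normr0.
Qed.

Lemma bnorm_beq (F G : (X -> R) -> R) : beq F G -> bnorm F = bnorm G.
Proof.
move=> e; rewrite /bnorm; congr sup; apply/seteqP; split => z [phi [d d1] <-];
  by exists phi => //; rewrite e.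
Qed.

Lemma canon_norm (y : X) : `|y| <= bnorm (Defs.canon y).
Proof.
have [phi [d d1 e]] := HB_sep y.
apply: (@sup_ge _ _ _ `|y|); last by exists phi => //; rewrite /Defs.canon e normr_id.
move=> z [psi [dpsi dpsi1] <-]; apply: (le_trans (dual_bound y dpsi)).
by rewrite -[leRHS]mul1r ler_wpM2r.
Qed.

Lemma bidual_lin (a : R) (F G : (X -> R) -> R) : bidual_elem F -> bidual_elem G ->
  bidual_elem (fun phi => a * F phi + G phi).
Proof.
move=> [linF [C1 H1]] [linG [C2 H2]]; split.
  move=> b phi psi dphi dpsi; rewrite linF // linG //; ring.
exists (`|a| * C1 + C2) => phi dphi.
apply: (le_trans (ler_normD _ _)); rewrite normrM mulrDl -mulrA.
apply: lerD; last exact: H2.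
by apply: ler_wpM2l => //; exact: H1.
Qed.

End Dual.

Theorem proposition1 (R : realType) (S : Type) (op : S -> S -> S)
  (op_assoc : forall a b c : S, op a (op b c) = op (op a b) c)
  (X : completeNormedModType R) :
  left_amenable R op ->
  complemented_in_bidual X ->
  exists M : (S -> X) -> X, X_valued_left_invariant_mean op M.
Proof.
move=> [m [mlin [mnorm [m1 minv]]]] [P [Pbid [Plin [[CP HCP] [Pproj [Prange Pcanon]]]]]].
have [s0 _] : exists s0 : S, True.
  apply: contrapT => nS.
  have : supnorm (fun _ : S => (1 : R)) = 0.
    rewrite /supnorm (_ : [set _ | _ in _] = set0) ?sup0 //.
    by apply/seteqP; split => // z [s _ _]; apply: nS; exists s.
  have b1 : bdd (fun _ : S => (1 : R)) by exists 1 => s; rewrite normr1.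
  by move=> h; have := mnorm _ b1; rewrite h m1 normr1 ler10.
have supconst (T : normedModType R) (x : T) : supnorm (fun _ : S => x) = `|x|.
  rewrite /supnorm (_ : [set _ | _ in _] = [set `|x|]) ?sup1 //.
  by apply/seteqP; split => [z [s _ <-] //| z ->]; exists s0.
have bdd_const (T : normedModType R) (x : T) : bdd (fun _ : S => x) by exists `|x|.
have m0 : m (fun _ => 0) = 0.
  have := mnorm _ (bdd_const R 0); rewrite supconst normr0 => h.
  by apply/eqP; rewrite -normr_eq0 eq_le h normr_ge0.
have mconst c : m (fun _ => c) = c.
  have := mlin c _ _ (bdd_const R 1) (bdd_const R 0).
  by rewrite m1 m0 !mulr1 !addr0.
have supnorm_ge (T : normedModType R) (f : S -> T) s : bdd f -> `|f s| <= supnorm f.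
  by move=> [C HC]; apply: (@sup_ge _ _ _ C); [move=> z [t _ <-]|exists s].
have supnorm_ge0 (T : normedModType R) (f : S -> T) : bdd f -> 0 <= supnorm f.
  by move=> b; apply: le_trans (supnorm_ge _ _ s0 b).
have bdd_comp (f : S -> X) phi : dual_elem phi -> bdd f -> bdd (fun s => phi (f s)).
  move=> d [C HC]; exists (dnorm phi * C) => s; rewrite /=.
  apply: (le_trans (dual_bound _ d)); by rewrite ler_wpM2l ?dnorm_ge0.
have supcomp (f : S -> X) phi : dual_elem phi -> bdd f ->
    supnorm (fun s => phi (f s)) <= dnorm phi * supnorm f.
  move=> d b; apply: sup_le; first by exists `|phi (f s0)|, s0.
  move=> z [s _ <-]; apply: (le_trans (dual_bound _ d)).
  by rewrite ler_wpM2l ?dnorm_ge0 // supnorm_ge.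
pose Ff (f : S -> X) := fun phi : X -> R => m (fun s => phi (f s)).
have Ffbid f : bdd f -> bidual_elem (Ff f).
  move=> b; split.
    by move=> a phi psi dphi dpsi; rewrite /Ff mlin //; apply: bdd_comp.
  exists (supnorm f) => phi d; rewrite mulrC.
  by apply: (le_trans (mnorm _ (bdd_comp _ _ d b))); apply: supcomp.
have Pzero G : bidual_elem G -> beq G (fun _ => 0) -> beq (P G) (fun _ => 0).
  move=> bG eG.
  have bn : bnorm G = 0.
    apply/eqP; rewrite eq_le bnorm_ge0 // andbT; apply: bnorm_le => phi d _.
    by rewrite eG // normr0.
  have [y ey] := Prange _ bG.
  have y0 : y = 0.
    apply/eqP; rewrite -normr_eq0 eq_le normr_ge0 andbT.
    apply: (le_trans (canon_norm y)); rewrite -(bnorm_beq ey).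
    by apply: (le_trans (HCP _ bG)); rewrite bn mulr0.
  by move=> phi d; rewrite ey // /Defs.canon y0 dual0.
have Presp F F' : bidual_elem F -> bidual_elem F' -> beq F F' -> beq (P F) (P F').
  move=> bF bF' e.
  have bG := bidual_lin (-1) bF bF'.
  have eF' : F' = (fun phi => 1 * F phi + (-1 * F phi + F' phi)).
    by rewrite funeqE => phi; ring.
  move=> phi d; rewrite eF' (Plin 1 _ _ bF bG) // (Pzero _ bG) //; first ring.
  by move=> psi dpsi; rewrite e //; ring.
pose M (f : S -> X) := xget 0 [set x | beq (P (Ff f)) (Defs.canon x)].
have MP f : bdd f -> beq (P (Ff f)) (Defs.canon (M f)).
  by move=> b; apply: (xgetPex 0 (Prange _ (Ffbid f b))).
have MP' f phi : bdd f -> dual_elem phi -> phi (M f) = P (Ff f) phi.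
  by move=> b d; rewrite (MP _ b _ d).
exists M; split; [|split; [|split]].
- move=> a f g bf bg.
  have bafg : bdd (fun s => a *: f s + g s).
    case: bf => [C1 H1]; case: bg => [C2 H2]; exists (`|a| * C1 + C2) => s.
    apply: (le_trans (ler_normD _ _)); rewrite normrZ; apply: lerD => //.
    exact: ler_wpM2l.
  apply: Jinj => phi d.
  rewrite (MP' _ _ bafg) // dual_add // dual_scale //.
  rewrite (MP' _ _ bf) // (MP' _ _ bg) //.
  rewrite (Presp _ (fun psi => a * Ff f psi + Ff g psi) (Ffbid _ bafg)) //.
  + by rewrite Plin //; apply: Ffbid.
  + by apply: bidual_lin; apply: Ffbid.
  + move=> psi dpsi; rewrite /Ff -mlin; try exact: bdd_comp.
    congr m; rewrite funeqE => s; by rewrite dual_add // dual_scale.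
- exists `|CP| => f b.
  have [phi [d d1 e]] := HB_sep (M f).
  rewrite -e (MP' _ _ b) //.
  apply: (le_trans (ler_norm _)).
  apply: (le_trans (bnorm_ge (Pbid _ (Ffbid _ b)) d d1)).
  apply: (le_trans (HCP _ (Ffbid _ b))).
  apply: (le_trans (ler_wpM2r (bnorm_ge0 (Ffbid _ b)) (ler_norm CP))).
  apply: ler_wpM2l => //; apply: bnorm_le => psi dpsi dpsi1.
  apply: (le_trans (mnorm _ (bdd_comp _ _ dpsi b))).
  apply: (le_trans (supcomp _ _ dpsi b)).
  by rewrite -[leRHS]mul1r ler_wpM2r // supnorm_ge0.
- move=> x; apply: Jinj => phi d.
  have eF : Ff (fun _ => x) = Defs.canon x by rewrite funeqE => psi; rewrite /Ff mconst.
  by rewrite (MP' _ _ (bdd_const _ x)) // eF Pcanon.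
- move=> f s b.
  have bs : bdd (ltrans op f s).
    by case: b => [C HC]; exists C => t; apply: HC.
  apply: Jinj => phi d.
  rewrite (MP' _ _ b) // (MP' _ _ bs) //; apply: Presp; try exact: Ffbid.
  move=> psi dpsi; rewrite /Ff.
  exact: (esym (minv (fun t => psi (f t)) s (bdd_comp _ _ dpsi b))).
exact: d.
Qed.
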